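(* Let $p$ be a prime with $p\equiv3\pmod 4$. Let $E$ be the group of translations of $\mathbb F_p^2$, let $Q\le{\rm SL}(2,p)$ be a subgroup isomorphic to the quaternion group $Q_8$, and let $g\in Q$ have order $4$. Then $E\rtimes Q$ and $E\rtimes\langle g\rangle$, acting on $\mathbb F_p^2$, are nonisomorphic primitive groups of degree $p^2$ with the same spectrum.
   Context: The spectrum of a permutation group is the set of cycle types of its elements. *)

(* Defs.v *)
From HB Require Import structures.
From mathcomp Require Import all_boot all_order all_algebra all_fingroup all_solvable all_field.
Set Implicit Arguments. Unset Strict Implicit. Unset Printing Implicit Defensive.
Import GRing.Theory.
Local Open Scope ring_scope.
Local Open Scope group_scope.

(* Cycle type of a permutation: the multiset (as a list, compared up to
   permutation) of the lengths of its cycles, fixed points included. *)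
Definition cycle_type (T : finType) (s : {perm T}) : seq nat :=
  [seq #|X| | X : {set T} <- enum (porbits s)].

Definition same_spectrum (T : finType) (G H : {set {perm T}}) : Prop :=
  (forall s, s \in G -> exists2 t, t \in H & perm_eq (cycle_type s) (cycle_type t)) /\
  (forall t, t \in H -> exists2 s, s \in G & perm_eq (cycle_type t) (cycle_type s)).

Definition affine_group (p : nat) (H : {set {'GL_2['F_p]}}) : {group {perm 'rV['F_p]_2}} :=
  <<[set s : {perm 'rV['F_p]_2} |
      [exists v : 'rV['F_p]_2, exists g in H,
         [forall x, s x == (x *m GLval g + v)%R]]]>>%G.

(* Main.v *)
Require Import Defs.
From HB Require Import structures.
From mathcomp Require Import all_boot all_order all_algebra all_fingroup all_solvable all_field.
From mathcomp Require Import ring zify.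
Set Implicit Arguments. Unset Strict Implicit. Unset Printing Implicit Defensive.
Import GRing.Theory.

Section Alg.
Local Open Scope ring_scope.
Variable R : comNzRingType.
Lemma det2 (M : 'M[R]_2) : \det M = M 0 0 * M 1 1 - M 0 1 * M 1 0.
Proof.
rewrite (expand_det_row _ 0) !big_ord_recl big_ord0 /cofactor !det_mx11 !mxE /=.
rewrite addr0 expr0 expr1 !mul1r mulN1r mulrN.
by congr (M _ _ * M _ _ - M _ _ * M _ _); apply/val_inj.
Qed.
Lemma mul2E (A B : 'M[R]_2) i j : (A *m B) i j = A i 0 * B 0 j + A i 1 * B 1 j.
Proof. rewrite mxE !big_ord_recl big_ord0 addr0.
by congr (A _ _ * B _ _ + A _ _ * B _ _); apply/val_inj. Qed.
Lemma vmul2E (x : 'rV[R]_2) (B : 'M[R]_2) j : (x *m B) 0 j = x 0 0 * B 0 j + x 0 1 * B 1 j.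
Proof. rewrite mxE !big_ord_recl big_ord0 addr0.
by congr (x _ _ * B _ _ + x _ _ * B _ _); apply/val_inj. Qed.
Lemma ord2P (P : 'I_2 -> Prop) : P 0 -> P 1 -> forall i, P i.
Proof. by move=> P0 P1 [[|[|//]] Hi]; [move: P0 | move: P1]; congr P; apply/val_inj. Qed.
End Alg.
Section Alg2.
Local Open Scope ring_scope.
Variable F : fieldType.
Lemma mx2_eq (A B : 'M[F]_2) : A 0 0 = B 0 0 -> A 0 1 = B 0 1 -> A 1 0 = B 1 0 -> A 1 1 = B 1 1 -> A = B.
Proof.
move=> h00 h01 h10 h11; apply/matrixP; apply: ord2P; apply: ord2P => //.
Qed.
Lemma invol2 (M : 'M[F]_2) : (2%:R : F) != 0 -> M *m M = 1%:M -> \det M = 1 ->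
  M = 1%:M \/ M = - 1%:M.
Proof.
move=> two0 MM dM.
have e i j : (M *m M) i j = (1%:M : 'M[F]_2) i j by rewrite MM.
have e00 := e 0 0; have e01 := e 0 1; have e10 := e 1 0; have e11 := e 1 1.
rewrite !mul2E !mxE /= in e00 e01 e10 e11.
rewrite det2 in dM.
set a := M 0 0 in e00 e01 e10 e11 dM *; set b := M 0 1 in e00 e01 e10 e11 dM *.
set c := M 1 0 in e00 e01 e10 e11 dM *; set d := M 1 1 in e00 e01 e10 e11 dM *.
have [ad0|ad0] := eqVneq (a + d) 0.
  exfalso; move/eqP: two0; apply.
  have hd : d = - a by apply/eqP; rewrite -addr_eq0 addrC ad0.
  rewrite hd in dM.
  have h : a * a + b * c + (a * - a - b * c) = 1 + 1 by rewrite e00 dM.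
  have -> : (2%:R : F) = 1 + 1 by [].
  rewrite -h; ring.
have b0 : b = 0.
  have : b * (a + d) = 0 by rewrite -[RHS]e01; ring.
  by move/eqP; rewrite mulf_eq0 (negbTE ad0) orbF => /eqP.
have c0 : c = 0.
  have : c * (a + d) = 0 by rewrite -[RHS]e10; ring.
  by move/eqP; rewrite mulf_eq0 (negbTE ad0) orbF => /eqP.
rewrite b0 c0 mulr0 subr0 in dM; rewrite b0 c0 mulr0 addr0 in e00.
have : (a - 1) * (a + 1) = 0 by transitivity (a * a - 1); [ring | rewrite e00 subrr].
move/eqP; rewrite mulf_eq0 => /orP[] /eqP ha.
  have a1 : a = 1 by apply/eqP; rewrite -subr_eq0 ha.
  rewrite a1 mul1r in dM.
  left; apply: mx2_eq; rewrite !mxE /= -/a -/b -/c -/d ?a1 ?b0 ?c0 ?dM //.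
have a1 : a = -1 by apply/eqP; rewrite -addr_eq0 ha.
have d1 : d = -1 by rewrite -[d]opprK -dM a1; ring.
right; apply: mx2_eq; rewrite !mxE /= -/a -/b -/c -/d ?a1 ?b0 ?c0 ?d1 ?oppr0 //.
Qed.
End Alg2.
Section Fp.
Local Open Scope ring_scope.
Variable p : nat.
Hypothesis p_pr : prime p.
Hypothesis p_mod4 : (p %% 4 = 3)%N.

Lemma p_gt2 : (2 < p)%N.
Proof.
have := prime_gt1 p_pr; rewrite leq_eqVlt => /orP[/eqP p2|//].
by move: p_mod4; rewrite -p2.
Qed.

Lemma two_neq0 : (2%:R : 'F_p) != 0.
Proof.
apply/eqP => /(congr1 (@nat_of_ord _)); rewrite val_Fp_nat // modn_small ?p_gt2 //.
Qed.

Lemma mul2_eq0 (x : 'F_p) : x + x = 0 -> x = 0.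
Proof.
move=> h; have : (2%:R : 'F_p) * x = 0 by rewrite mulr_natl mulr2n.
by move/eqP; rewrite mulf_eq0 (negbTE two_neq0) => /eqP.
Qed.

Lemma no_sqrtm1 (l : 'F_p) : l * l != -1.
Proof.
apply/eqP => hl.
have l0 : l != 0 by apply: contra_eq_neq hl => ->; rewrite mul0r eq_sym oppr_eq0 oner_eq0.
have hp := expf_card l; rewrite card_Fp // in hp.
have dp : p = (4 * (p %/ 4) + 3)%N by rewrite {1}(divn_eq p 4) p_mod4 mulnC.
have l2 : l ^+ 2 = -1 by rewrite expr2.
have l4 : l ^+ 4 = 1 by rewrite (exprM l 2 2) l2 expr2 mulrNN mulr1.
have : l ^+ p = - l.
  have -> : l ^+ p = l ^+ (4 * (p %/ 4) + 3) by apply: congr1; exact dp.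
  rewrite exprD exprM l4 expr1n mul1r (exprS l 2) l2.
  by rewrite mulrN1.
rewrite hp => h.
have : l + l = 0 by rewrite {2}h subrr.
by move/mul2_eq0/eqP; rewrite (negbTE l0).
Qed.

Variable M : 'M['F_p]_2.
Hypothesis MM : M *m M = - 1%:M.

Lemma MM_apply (w : 'rV['F_p]_2) : w *m M *m M = - w.
Proof. by rewrite -mulmxA MM mulmxN mulmx1. Qed.

Lemma fix_MM (w : 'rV['F_p]_2) : w *m M *m M = w -> w = 0.
Proof.
rewrite MM_apply => h; apply/matrixP => i j; rewrite mxE; apply: mul2_eq0.
have := congr1 (fun A : 'rV_2 => A i j) h; rewrite /= mxE => e.
by rewrite -{1}e addNr.
Qed.

Lemma no_eigen (w : 'rV['F_p]_2) (l : 'F_p) : w != 0 -> w *m M != l *: w.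
Proof.
move=> w0; apply/eqP => h.
have := MM_apply w; rewrite h -scalemxAl h scalerA => h2.
have : (l * l + 1) *: w = 0 by rewrite scalerDl h2 scale1r addrC subrr.
by move/eqP; rewrite scaler_eq0 (negbTE w0) orbF addr_eq0 (negbTE (no_sqrtm1 l)).
Qed.

Lemma span2 (w : 'rV['F_p]_2) : w != 0 ->
  forall x : 'rV['F_p]_2, exists a b, x = a *: w + b *: (w *m M).
Proof.
move=> w0 x; set u := w *m M.
set D := w 0 0 * u 0 1 - w 0 1 * u 0 0.
have [D0|D0] := eqVneq D 0.
  exfalso.
  have [w00|w00] := eqVneq (w 0 0) 0.
    have w01 : w 0 1 != 0.
      apply: contra w0 => /eqP w01; apply/eqP/matrixP => i j; rewrite !mxE.
      by rewrite (ord1 i); move: j; apply: ord2P.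
    have u00 : u 0 0 = 0.
      move: D0; rewrite /D w00 mul0r sub0r => /eqP.
      by rewrite oppr_eq0 mulf_eq0 (negbTE w01) /= => /eqP.
    move/eqP: (no_eigen (u 0 1 / w 0 1) w0); apply.
    apply/matrixP => i j; rewrite (ord1 i) [in RHS]mxE; move: j; apply: ord2P.
      by rewrite w00 u00 mulr0.
    by rewrite mulrVK // unitfE.
  move/eqP: (no_eigen (u 0 0 / w 0 0) w0); apply.
  apply/matrixP => i j; rewrite (ord1 i) [in RHS]mxE; move: j; apply: ord2P.
    by rewrite mulrVK // unitfE.
  apply: (mulfI w00); rewrite mulrA mulrCA mulrV ?unitfE // mulr1.
  by rewrite -/u; apply/eqP; rewrite -subr_eq0 [u 0 0 * _]mulrC; apply/eqP; exact: D0.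
exists ((x 0 0 * u 0 1 - x 0 1 * u 0 0) / D); exists ((w 0 0 * x 0 1 - w 0 1 * x 0 0) / D).
move: D0; rewrite /D; clear D; clearbody u => D0.
apply/matrixP => i j; rewrite (ord1 i) !mxE; move: j; apply: ord2P;
  field; exact: D0.
Qed.
End Fp.

Lemma list14 (l : seq nat) : (forall n, n \in l -> n = 1 \/ n = 4) ->
  count (pred1 1) l <= 1 -> sumn l %% 4 = 1 ->
  perm_eq l (1 :: nseq (sumn l %/ 4) 4).
Proof.
move=> h14.
have hc : forall a : pred nat, count a l = a 1 * count (pred1 1) l + a 4 * count (pred1 4) l.
  move=> a; elim: l h14 => [|n l IH] h; first by rewrite /= !muln0.
  rewrite /= IH; last by move=> m ml; apply: h; rewrite inE ml orbT.
  by case: (h n (mem_head _ _)) => ->; case: (a 1); case: (a 4) => /=; lia.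
have hs : sumn l = count (pred1 1) l + 4 * count (pred1 4) l.
  elim: l h14 {hc} => [|n l IH] h; first by rewrite /= muln0.
  rewrite /= IH; last by move=> m ml; apply: h; rewrite inE ml orbT.
  by case: (h n (mem_head _ _)) => -> /=; lia.
move=> c1 smod; rewrite hs in smod *.
have c1e : count (pred1 1) l = 1 by lia.
apply/seq.permP => a; rewrite hc /= count_nseq c1e.
have -> : (1 + 4 * count (pred1 4) l) %/ 4 = count (pred1 4) l by lia.
by case: (a 1); case: (a 4) => /=; lia.
Qed.

Section Cyc.
Variable T : finType.
Variable s : {perm T}.
Hypothesis s4 : forall x, (s ^+ 4)%g x = x.
Hypothesis fix2 : forall x y, (s ^+ 2)%g x = x -> (s ^+ 2)%g y = y -> x = y.
Hypothesis cT : #|T| %% 4 = 1.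

Lemma iter_mul k q x : iter k s x = x -> iter (q * k) s x = x.
Proof. by move=> h; elim: q => [|q IH] //; rewrite mulSn iterD IH h. Qed.

Lemma porbit_le k x : 0 < k -> iter k s x = x -> #|porbit s x| <= k.
Proof.
move=> k0 h.
have sub : porbit s x \subset [set iter (val i) s x | i : 'I_k].
  apply/subsetP => y /porbitP [i ->]; rewrite permX.
  apply/imsetP; exists (Ordinal (ltn_pmod i k0)) => //=.
  by rewrite {1}(divn_eq i k) addnC iterD iter_mul.
apply: leq_trans (subset_leq_card sub) _.
by apply: leq_trans (leq_imset_card _ _) _; rewrite card_ord.
Qed.

Lemma sfix x : (s ^+ 2)%g x = x -> s x = x.
Proof.
move=> h; apply/esym/fix2 => //; rewrite permX /=.
by move: h; rewrite permX /= => ->.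
Qed.

Lemma size_orbit x : #|porbit s x| = 1 \/ #|porbit s x| = 4.
Proof.
have le4 : #|porbit s x| <= 4 by apply: porbit_le => //; rewrite -permX s4.
have ne0 := card_porbit_neq0 s x.
have it := iter_porbit s x.
have [sx|sx] := eqVneq (s x) x.
  by left; apply/eqP; rewrite eqn_leq lt0n ne0 andbT porbit_le.
move: le4 ne0 it; case: #|porbit s x| => [|[|[|[|[|n]]]]] //= _ _; try by right.
- by move=> h; rewrite h eqxx in sx.
- move=> h; have := @sfix x; rewrite permX /= h => /(_ erefl) e; by rewrite e eqxx in sx.
- move=> h; have := s4 x; rewrite permX /= h => h2.
  by rewrite h2 eqxx in sx.
Qed.

Lemma card1_fix x : #|porbit s x| = 1 -> s x = x.
Proof. by move=> h; have := iter_porbit s x; rewrite h. Qed.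

Lemma porbits_partition : partition (porbits s) [set: T].
Proof.
apply/and3P; split.
- rewrite eqEsubset subsetT /=; apply/subsetP => x _; apply/bigcupP.
  by exists (porbit s x); [apply: imset_f | apply: porbit_id].
- apply/trivIsetP => A B /imsetP[x _ ->] /imsetP[y _ ->] neq.
  rewrite -setI_eq0; apply/eqP/setP => z; rewrite !inE; apply/negP => /andP[zx zy].
  move: neq; rewrite -(eqP (_ : porbit s z == porbit s x)); last by rewrite eq_porbit_mem.
  by rewrite (eqP (_ : porbit s z == porbit s y)) ?eqxx // eq_porbit_mem.
- apply/imsetP => -[x _ h]; have := porbit_id s x; by rewrite -h inE.
Qed.

Lemma cycle_type_std : perm_eq (cycle_type s) (1 :: nseq (#|T| %/ 4) 4).
Proof.
have hsum : sumn (cycle_type s) = #|T|.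
  rewrite sumnE /cycle_type big_map big_enum /=.
  by rewrite -cardsT (card_partition porbits_partition).
rewrite -{1}hsum; apply: list14; last by rewrite hsum.
  move=> n /mapP [X]; rewrite mem_enum => /imsetP[x _ ->] ->; exact: size_orbit.
rewrite /cycle_type count_map -size_filter.
set L := filter _ _.
have : uniq L by rewrite filter_uniq ?enum_uniq.
have hall : forall X Y, X \in L -> Y \in L -> X = Y.
  move=> X Y; rewrite !mem_filter /= => /and3P[/eqP X1 /imsetP[x _ Xx] _] /and3P[/eqP Y1 /imsetP[y _ Yy] _].
  rewrite Xx Yy in X1 Y1 *; congr porbit; apply: fix2.
    by rewrite permX /= !card1_fix.
  by rewrite permX /= !card1_fix.
case: L hall => [|X [|Y r]] //= hall.
case/and3P; rewrite inE negb_or => /andP[XY _] _ _; move: XY.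
rewrite (hall X Y) ?eqxx // !inE eqxx ?orbT //.
Qed.
End Cyc.


Section Aff.
Variable p : nat.
Local Notation V := 'rV['F_p]_2.
Local Notation GL := {'GL_2['F_p]}.

Lemma aff_inj (g : GL) (v : V) : injective (fun x : V => (x *m GLval g + v)%R).
Proof.
move=> x y /= /addIr h.
by rewrite -(mulmxK (GL_unitmx g) x) -(mulmxK (GL_unitmx g) y) h.
Qed.

Definition affp (g : GL) (v : V) : {perm V} := perm (@aff_inj g v).

Lemma affpE g v x : affp g v x = (x *m GLval g + v)%R.
Proof. by rewrite permE. Qed.

Definition affS (H : {set GL}) : {set {perm V}} :=
  [set s : {perm V} |
      [exists v : V, exists g in H,
         [forall x, s x == (x *m GLval g + v)%R]]].

Lemma affS_P (H : {set GL}) (s : {perm V}) :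
  reflect (exists v, exists2 g, g \in H & forall x, s x = (x *m GLval g + v)%R) (s \in affS H).
Proof.
rewrite inE; apply: (iffP existsP) => [[v /exists_inP [g gH /forallP h]]|[v [g gH h]]].
  by exists v, g => // x; apply/eqP.
by exists v; apply/exists_inP; exists g => //; apply/forallP => x; rewrite h.
Qed.

Lemma affS_group (H : {group GL}) : group_set (affS H).
Proof.
apply/group_setP; split.
  by apply/affS_P; exists 0%R, 1%g => // x; rewrite perm1 GL_1E mulmx1 addr0.
move=> s t /affS_P [v [g gH hs]] /affS_P [w [h hH ht]].
apply/affS_P; exists (v *m GLval h + w)%R, (g * h)%g; first by rewrite groupM.
by move=> x; rewrite permM ht hs GL_MxE mulmxDl mulmxA addrA.
Qed.

Lemma affine_groupE (H : {group GL}) : affine_group H = affS H :> {set _}.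
Proof. by rewrite /affine_group /= gen_set_id // affS_group. Qed.

Lemma affp_in (H : {group GL}) g v : g \in H -> affp g v \in affine_group H.
Proof. by move=> gH; rewrite affine_groupE; apply/affS_P; exists v, g => // x; rewrite affpE. Qed.

Lemma affine_groupP (H : {group GL}) (s : {perm V}) :
  reflect (exists v, exists2 g, g \in H & forall x, s x = (x *m GLval g + v)%R) (s \in affine_group H).
Proof. by rewrite affine_groupE; apply: affS_P. Qed.

Lemma affine_groupS (H K : {group GL}) : H \subset K -> affine_group H \subset affine_group K.
Proof.
move=> sHK; rewrite !affine_groupE; apply/subsetP => s /affS_P [v [g gH h]].
by apply/affS_P; exists v, g => //; apply: (subsetP sHK).
Qed.

Lemma GLvalX (g : GL) n : GLval (g ^+ n)%g = (GLval g ^+ n)%R.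
Proof. by elim: n => [|n IH]; rewrite ?expg0 ?expr0 // expgS exprS GL_ME IH. Qed.

End Aff.


Section Prim.
Variable p : nat.
Hypothesis p_pr : prime p.
Hypothesis p_mod4 : p %% 4 = 3.
Local Notation V := 'rV['F_p]_2.
Local Notation GL := {'GL_2['F_p]}.
Variable H : {group GL}.
Variable g : GL.
Hypothesis gH : g \in H.
Hypothesis gg : (GLval g *m GLval g = - 1%:M)%R.

Lemma aff_prim : [primitive affine_group H, on [set: V] | 'P].
Proof.
have tr (v : V) : affp 1 v \in affine_group H by apply: affp_in.
have lin : affp g 0 \in affine_group H by apply: affp_in.
rewrite /primitive; apply/andP; split.
  apply/imsetP; exists 0%R => //; apply/setP => y; rewrite inE; apply/esym.
  have := mem_orbit 'P 0%R (tr y).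
  by rewrite /= apermE affpE GL_1E mul0mx add0r.
apply/existsP => -[P /and3P [partP actP cardP]].
case/and3P: partP => /eqP covP trivP nP0.
have key a x : a \in affine_group H -> a @: pblock P x = pblock P (a x).
  move=> aG; apply/esym/def_pblock => //.
    by have := (actsP actP) a aG (pblock P x); rewrite /= setactE pblock_mem ?covP.
  by apply: imset_f; rewrite mem_pblock covP.
set B0 := pblock P 0%R.
have B0P : B0 \in P by rewrite pblock_mem ?covP.
have B00 : (0%R : V) \in B0 by rewrite mem_pblock covP.
have addB u w : u \in B0 -> w \in B0 -> (u + w)%R \in B0.
  move=> uB wB; have := key (affp 1 w) 0%R (tr w).
  rewrite affpE GL_1E mul0mx add0r (def_pblock trivP B0P wB) => e.
  by rewrite -e; apply/imsetP; exists u => //; rewrite affpE GL_1E mulmx1.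
have linB u : u \in B0 -> (u *m GLval g)%R \in B0.
  move=> uB; have := key (affp g 0) 0%R lin.
  rewrite affpE mul0mx add0r -/B0 => e.
  by rewrite -e; apply/imsetP; exists u => //; rewrite affpE addr0.
have natB u n : u \in B0 -> (u *+ n)%R \in B0.
  by move=> uB; elim: n => [|n IH]; rewrite ?mulr0n // mulrS addB.
have sclB u (a : 'F_p) : u \in B0 -> (a *: u)%R \in B0.
  by move=> uB; rewrite -[a]natr_Zp scaler_nat natB.
have [w /andP[wB w0']|allz] := pickP (fun w => (w \in B0) && (w != 0%R)).
  have B0T : forall x, x \in B0.
    move=> x; have [a [b ->]] := span2 p_pr p_mod4 gg w0' x.
    by rewrite addB // sclB // linB.
  move: cardP; rewrite ltnNge => /andP[/negP nP _]; apply: nP.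
  suff : P \subset [set B0] by move/subset_leq_card; rewrite cards1.
  apply/subsetP => Y YP; rewrite inE.
  have /set0Pn [y yY] : Y != set0 by apply: contraNneq nP0 => <-.
  by rewrite -(def_pblock trivP YP yY) (def_pblock trivP B0P (B0T y)).
have B01 : forall u, u \in B0 -> u = 0%R.
  by move=> u uB; have := allz u; rewrite /= uB /= => /negbFE/eqP.
move: cardP => /andP[_]; rewrite ltnNge => /negP; apply.
have -> : #|[set: V]| = #|[set pblock P x | x in [set: V]]|.
  rewrite card_in_imset // => x y _ _ e.
  have := key (affp 1 x) 0%R (tr x); rewrite affpE GL_1E mul0mx add0r -/B0 => ex.
  have := key (affp 1 y) 0%R (tr y); rewrite affpE GL_1E mul0mx add0r -/B0 => ey.
  have : y \in pblock P x by rewrite e mem_pblock covP.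
  rewrite -ex => /imsetP [b bB]; rewrite affpE GL_1E mulmx1 (B01 b bB) add0r.
  by move=> ->.
apply: subset_leq_card; apply/subsetP => _ /imsetP [x _ ->].
by rewrite pblock_mem ?covP.
Qed.
End Prim.


Section Spec.
Variable p : nat.
Hypothesis p_pr : prime p.
Hypothesis p_mod4 : p %% 4 = 3.
Local Notation V := 'rV['F_p]_2.

Lemma cardV : #|[set: V]| = p ^ 2.
Proof. by rewrite cardsT card_mx card_Fp. Qed.

Lemma cardV4 : #|V| %% 4 = 1.
Proof.
rewrite -cardsT cardV -modnXm p_mod4 //.
Qed.

Lemma vec2_eq0 (w : V) : (w + w = 0)%R -> w = 0%R.
Proof.
move=> h; apply/matrixP => i j; rewrite mxE; apply: (mul2_eq0 p_pr p_mod4).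
by have := congr1 (fun A : V => A i j) h; rewrite /= !mxE.
Qed.

Lemma ct_aff (s : {perm V}) (M : 'M['F_p]_2) (v : V) :
  (M *m M = - 1%:M)%R -> (forall x, s x = x *m M + v)%R ->
  perm_eq (cycle_type s) (1 :: nseq (#|V| %/ 4) 4).
Proof.
move=> MM hs.
have s2 x : (s ^+ 2)%g x = (- x + (v *m M + v))%R.
  by rewrite permX /= !hs mulmxDl (MM_apply MM) addrA.
apply: cycle_type_std; last exact: cardV4.
  move=> x; rewrite (_ : 4 = 2 + 2)%N // expgD permM !s2.
  by rewrite opprD opprK subrK.
move=> x y; rewrite !s2 => hx hy.
have ex : (x + x = v *m M + v)%R by rewrite -{2}hx addrA subrr add0r.
have ey : (y + y = v *m M + v)%R by rewrite -{2}hy addrA subrr add0r.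
apply/eqP; rewrite -subr_eq0; apply/eqP/vec2_eq0.
by rewrite addrACA -opprD ex ey subrr.
Qed.
End Spec.


Lemma GLsq p (h : {'GL_2['F_p]}) : GLval (h ^+ 2)%g = (GLval h *m GLval h)%R.
Proof. by rewrite -GL_MxE expgS expg1. Qed.

Lemma GL_eq p (h k : {'GL_2['F_p]}) : GLval h = GLval k -> h = k.
Proof. exact: val_inj. Qed.

Theorem mainTheorem13 (p : nat) (p_pr : prime p) (p_mod4 : p %% 4 = 3)
    (Q : {group {'GL_2['F_p]}})
    (QSL : forall g, g \in Q -> (\det (GLval g))%R = 1%R)
    (Qiso : (Q \isog 'Q_8)%g)
    (g : {'GL_2['F_p]}) (gQ : g \in Q) (g4 : #[g]%g = 4) :
  let G1 := affine_group Q in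
  let G2 := affine_group <[g]>%g in
  ~~ (G1 \isog G2)%g /\
  [primitive G1, on [set: 'rV['F_p]_2] | 'P] /\
  [primitive G2, on [set: 'rV['F_p]_2] | 'P] /\
  #|[set: 'rV['F_p]_2]| = p ^ 2 /\
  same_spectrum G1 G2.
Proof.
move=> G1 G2.
have two0 := two_neq0 p_pr p_mod4.
have g4' : (g ^+ 4 = 1)%g by rewrite -g4 expg_order.
have GL1 (h : {'GL_2['F_p]}) : (h ^+ 4 = 1)%g -> h \in Q ->
    GLval (h ^+ 2)%g = 1%:M%R \/ GLval (h ^+ 2)%g = (- 1%:M)%R.
  move=> h4 hQ; apply: invol2 => //; last by apply: QSL; rewrite groupX.
  have e4 : (h^+2 * h^+2 = 1)%g by rewrite -expgD; exact: h4.
  have := GL_MxE (h^+2)%g (h^+2)%g; rewrite e4 GL_1E => e; exact: (esym e).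
have gg2 : GLval (g ^+ 2)%g = (- 1%:M)%R.
  case: (GL1 g g4' gQ) => // h; exfalso.
  have : (g ^+ 2 = 1)%g by apply: GL_eq; rewrite h GL_1E.
  by move/eqP; rewrite -order_dvdn g4.
have gg : (GLval g *m GLval g = - 1%:M)%R by rewrite -GLsq.
have [[x y] genQ _] := generators_quaternion (isT : 2 < 3) Qiso.
have [[_ ord4 _] _ _ _ _] := quaternion_structure (isT : 2 < 3) genQ Qiso.
case: genQ => cQ xQ ox _.
have Q4 h : h \in Q -> (h ^+ 4 = 1)%g.
  move=> hQ; apply/eqP; rewrite -order_dvdn.
  have [hx|hx] := boolP (h \in <[x]>%g).
    by apply: dvdn_trans (order_dvdG hx) _; rewrite -orderE ox.
  by rewrite ord4 // inE hx hQ.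
have sub : G2 \subset G1 by apply: affine_groupS; rewrite cycle_subG.
have cg : #|<[g]>%g| = 4 by rewrite -orderE g4.
have : ~~ (Q \subset <[g]>%g).
  by apply/negP => /subset_leq_card; rewrite cQ cg.
case/subsetPn => h hQ hng.
split.
  apply/negP => iso.
  have /eqP e : (G2 : {set _}) == G1 by rewrite eqEcard sub /= (card_isog iso).
  have : affp h 0 \in G2 by rewrite e; apply: affp_in.
  case/affine_groupP => v [A Ag hA].
  have v0 : v = 0%R by have := hA 0%R; rewrite affpE !mul0mx !add0r.
  move: hng; rewrite (_ : h = A) ?Ag //; apply: GL_eq.
  apply/row_matrixP => i; rewrite !rowE.
  by have := hA (delta_mx ord0 i); rewrite affpE v0 !addr0.
split; first exact: (aff_prim p_pr p_mod4 gQ gg).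
split; first exact: (aff_prim p_pr p_mod4 (cycle_id g) gg).
split; first exact: (cardV p_pr).
split; last first.
  by move=> t tG2; exists t => //; apply: (subsetP sub).
move=> s /affine_groupP [v [A AQ hs]].
case: (GL1 A (Q4 A AQ) AQ) => hA2.
  have AA : (GLval A *m GLval A = 1%:M)%R by rewrite -GLsq.
  exists s => //; apply/affine_groupP; exists v, A => //.
  case: (invol2 two0 AA (QSL A AQ)) => hA.
    by rewrite (_ : A = 1%g) ?group1 //; apply: GL_eq; rewrite hA GL_1E.
  by rewrite (_ : A = g ^+ 2)%g ?mem_cycle //; apply: GL_eq; rewrite hA gg2.
exists (affp g 0); first by apply: affp_in; exact: cycle_id.
have AA : (GLval A *m GLval A = - 1%:M)%R by rewrite -GLsq.
apply: perm_trans (ct_aff p_pr p_mod4 AA hs) _.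
rewrite perm_sym; apply: (ct_aff p_pr p_mod4 gg) => z.
by rewrite affpE.
Qed.
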